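(* Let $\mathbf T$ be a countable homogeneous tournament and $\mathbf T^*$ an expansion of $\mathbf T$ as in the context such that $\mathrm{Age}(\mathbf T^* )$ has the Ramsey property. Then for every positive integer $n$, the class $\mathrm{Age}(I_n[\mathbf T]^* )$ has the Ramsey property.
   Context: For relational structures $\mathbf A,\mathbf B$ in the same language, $\binom{\mathbf B}{\mathbf A}$ denotes the set of substructures of $\mathbf B$ isomorphic to $\mathbf A$. For $k\ge 1$, $\mathbf C\to(\mathbf B)^{\mathbf A}_k$ means: for every map $c:\binom{\mathbf C}{\mathbf A}\to[k]=\{0,\dots,k-1\}$ there is $\mathbf B'\in\binom{\mathbf C}{\mathbf B}$ such that $c$ is constant on $\binom{\mathbf B'}{\mathbf A}$. A class $\mathcal K$ of finite structures has the Ramsey property if for all $k\ge1$ and all $\mathbf A,\mathbf B\in\mathcal K$ there is $\mathbf C\in\mathcal K$ with $\mathbf C\to(\mathbf B)^{\mathbf A}_k$. The age $\mathrm{Age}(\mathbf F)$ of a structure $\mathbf F$ is the class of finite structures embeddable in $\mathbf F$. A tournament is a directed graph in which every pair of distinct vertices carries exactly one directed edge; it is homogeneous if every isomorphism between finite substructures extends to an automorphism. $\mathbf T=(T,E^{\mathbf T})$ is a countable homogeneous tournament, and $\mathbf T^*$ is an expansion of $\mathbf T$ to a countable relational language $L_{\mathbf T^*}\supseteq\{E,<\}$ in which $<$ is interpreted as a linear order $<^*$ on $T$. For a positive integer $n$, $[n]=\{0,\dots,n-1\}$. The structure $I_n[\mathbf T]^*$ has universe $[n]\times T$ and language $L_{\mathbf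 T^*}\cup\{P_0,\dots,P_{n-1}\}$ ($P_i$ new unary symbols), interpreted as: for each $m$-ary $R\in L_{\mathbf T^*}\setminus\{<\}$ (including $E$), $R((k_1,x_1),\dots,(k_m,x_m))$ iff $k_1=\dots=k_m$ and $R^{\mathbf T^*}(x_1,\dots,x_m)$; $(i,x)<(j,y)$ iff $i<j$, or $i=j$ and $x<^*y$; and $P_i=\{i\}\times T$. (Thus its $\{E\}$-reduct $I_n[\mathbf T]$ is the disjoint union of $n$ copies of $\mathbf T$ with no edges between copies.) *)

(* Defs.v *)
From HB Require Import structures.
From mathcomp Require Import all_boot.
Set Implicit Arguments. Unset Strict Implicit. Unset Printing Implicit Defensive.

Record lang := Lang { sym : countType; ar : sym -> nat }.

(* An interpretation of L on a carrier A: for each symbol, a relation on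
   lists of elements (only lists of length [ar s] are ever consulted). *)
Definition interp (L : lang) (A : Type) := forall s : sym L, seq A -> Prop.

Record finstr (L : lang) := FinStr { fcar : finType; frel : interp L fcar }.
Arguments frel [L] f s _.

Definition is_embedding (L : lang) (A B : Type) (IA : interp L A)
    (IB : interp L B) (f : A -> B) : Prop :=
  injective f /\
  forall (s : sym L) (xs : seq A), size xs = ar s -> (IA s xs <-> IB s (map f xs)).

Definition age (L : lang) (T : Type) (I : interp L T) (A : finstr L) : Prop :=
  exists f : fcar A -> T, is_embedding (frel A) I f.

Definition copy (L : lang) (C A : finstr L) (S : {set fcar C}) : Prop :=
  exists f : fcar A -> fcar C,
    is_embedding (frel A) (frel C) f /\ S = f @: [set: fcar A].

Definition arrows (L : lang) (C B A : finstr L) (k : nat) : Prop :=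
  forall c : {set fcar C} -> 'I_k,
    exists S' : {set fcar C}, copy B S' /\
      forall S1 S2 : {set fcar C}, S1 \subset S' -> S2 \subset S' ->
        copy A S1 -> copy A S2 -> c S1 = c S2.

Definition ramsey (L : lang) (K : finstr L -> Prop) : Prop :=
  forall k : nat, 0 < k -> forall A B : finstr L, K A -> K B ->
    exists C : finstr L, K C /\ arrows C B A k.

Definition binrel (L : lang) (T : Type) (I : interp L T) (s : sym L) (x y : T) : Prop :=
  I s [:: x; y].

Definition countable (T : Type) : Prop := exists f : T -> nat, injective f.

Definition tournament (T : Type) (R : T -> T -> Prop) : Prop :=
  (forall x, ~ R x x) /\
  (forall x y, x <> y -> R x y \/ R y x) /\
  (forall x y, R x y -> ~ R y x).

(* Homogeneity: every isomorphism between finite substructures (given by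
   injective enumerations a, b of the same length) extends to an automorphism. *)
Definition homogeneous (T : Type) (R : T -> T -> Prop) : Prop :=
  forall (m : nat) (a b : 'I_m -> T), injective a -> injective b ->
    (forall i j, R (a i) (a j) <-> R (b i) (b j)) ->
    exists sigma : T -> T, bijective sigma /\
      (forall x y, R x y <-> R (sigma x) (sigma y)) /\
      (forall i, sigma (a i) = b i).

Definition strict_linear_order (T : Type) (R : T -> T -> Prop) : Prop :=
  (forall x, ~ R x x) /\
  (forall x y z, R x y -> R y z -> R x z) /\
  (forall x y, x <> y -> R x y \/ R y x).

Definition ext_lang (L : lang) (n : nat) : lang :=
  @Lang (sym L + 'I_n)%type
        (fun s => match s with inl s0 => ar s0 | inr _ => 1 end).

Definition same_copy (n : nat) (T : Type) (xs : seq ('I_n * T)) : bool :=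
  match xs with
  | [::] => true
  | p :: ys => all (fun q => q.1 == p.1) ys
  end.

Definition In_interp (L : lang) (lt : sym L) (n : nat) (T : Type) (I : interp L T)
  : interp (ext_lang L n) ('I_n * T) :=
  fun s xs =>
    match s with
    | inl R =>
        if R == lt then
          match xs with
          | [:: p; q] => (p.1 < q.1)%N \/ (p.1 = q.1 /\ I lt [:: p.2; q.2])
          | _ => False
          end
        else same_copy xs /\ I R (map snd xs)
    | inr i =>
        match xs with
        | [:: p] => p.1 = i
        | _ => False
        end
    end.
Arguments In_interp [L] lt n [T] I s xs.

(* Main.v *)
Require Import Defs.
From HB Require Import structures.
From mathcomp Require Import all_boot.
From Stdlib Require Import ClassicalEpsilon Classical.
Require Import Defs.
Set Implicit Arguments. Unset Strict Implicit. Unset Printing Implicit Defensive.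

Lemma emb_char (L : lang) (A B C : Type) (IA : interp L A) (IB : interp L B)
  (IC : interp L C) eA eB (f : A -> B) :
  is_embedding IA IC eA -> is_embedding IB IC eB ->
  (is_embedding IA IB f <-> injective f /\ forall s xs, size xs = ar s ->
     (IC s (map eA xs) <-> IC s (map (eB \o f) xs))).
Proof.
move=> [_ HA] [_ HB]; split.
  move=> [fi Hf]; split=> // s xs Hs.
  rewrite -HA // map_comp -HB ?size_map //; exact: Hf.
move=> [fi Hf]; split=> // s xs Hs.
rewrite HA // HB ?size_map // -map_comp; exact: Hf.
Qed.

Section Main.
Variables (L : lang) (lt : sym L) (T : Type) (I : interp L T) (n : nat).
Hypothesis Hlt : ar lt = 2.
Local Notation Ln := (ext_lang L n).
Local Notation J := (In_interp lt n I).

Definition ind_eq (X : Type) (u v : X -> 'I_n * T) :=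
  forall (s : sym Ln) xs, size xs = ar s -> (J s (map u xs) <-> J s (map v xs)).
Definition pw (X : Type) (u v : X -> 'I_n * T) :=
  forall (s : sym L) xs, size xs = ar s -> same_copy (map u xs) ->
    (I s (map (snd \o u) xs) <-> I s (map (snd \o v) xs)).
Definition fst_eq (X : Type) (u v : X -> 'I_n * T) := forall x, (u x).1 = (v x).1.

Lemma same_copy_fst X (u v : X -> 'I_n * T) xs :
  fst_eq u v -> same_copy (map u xs) = same_copy (map v xs).
Proof.
move=> H; case: xs => //= x xs; rewrite !all_map; apply: eq_all => y /=.
by rewrite !H.
Qed.

Lemma ind_fst X (u v : X -> 'I_n * T) : ind_eq u v -> fst_eq u v.
Proof.
move=> H x; have := H (inr (u x).1) [:: x] erefl => /=.
by case=> /(_ erefl) ->.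
Qed.

Lemma ind_pw X (u v : X -> 'I_n * T) : ind_eq u v -> pw u v.
Proof.
move=> H s xs Hs sc; have Hf := ind_fst H.
have := H (inl s) xs Hs; rewrite /= -!map_comp.
case: eqP => [e|ne].
  subst s; rewrite Hlt in Hs.
  case: xs Hs sc => [|a [|b [|c l]]] //= _; rewrite andbT => /eqP e.
  rewrite -!Hf e ltnn => h; split => hh.
    by case: (proj1 h (or_intror (conj erefl hh))) => // [][].
  by case: (proj2 h (or_intror (conj erefl hh))) => // [][].
rewrite (same_copy_fst xs Hf) in sc *; rewrite sc.
by move=> h; split=> hh; [case: (proj1 h (conj erefl hh)) | case: (proj2 h (conj erefl hh))].
Qed.
Lemma pw_ind X (u v : X -> 'I_n * T) : fst_eq u v -> pw u v -> ind_eq u v.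
Proof.
move=> Hf H [R|i] xs Hs /=.
  rewrite -!map_comp; case: eqP => [e|ne].
    subst R; rewrite /= Hlt in Hs.
    case: xs Hs => [|a [|b [|c l]]] //= _.
    rewrite -!Hf; case: (ltngtP (u a).1 (u b).1) => hab.
    - by split=> _; left.
    - by split=> -[//|[e hh]]; move: hab; rewrite e ltnn.
    have sc: same_copy [seq u i | i <- [:: a; b]].
      by rewrite /= andbT eq_sym; apply/eqP/val_inj.
    have := H lt [:: a; b] (esym Hlt) sc => /= hI.
    by split=> -[//|[e hh]]; right; split=> //; apply/hI.
  rewrite (same_copy_fst xs Hf); split=> -[sc hh]; split=> //.
    by apply/(H R xs Hs); rewrite ?(same_copy_fst xs Hf).
  by apply/(H R xs Hs); rewrite ?(same_copy_fst xs Hf).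
case: xs Hs => [|a [|b l]] //= _.
by rewrite Hf.
Qed.

Lemma lift_seq (X : finType) (P : pred X) (xs : seq X) :
  all P xs -> exists ys : seq {x | P x}, map val ys = xs.
Proof.
elim: xs => [|x xs IH] /=; first by exists [::].
case/andP=> px /IH [ys <-]; by exists (exist _ x px :: ys).
Qed.

Lemma sc_all X (u : X -> 'I_n * T) x0 xs :
  same_copy (map u (x0 :: xs)) -> all (fun x => (u x).1 == (u x0).1) (x0 :: xs).
Proof. by rewrite /= all_map eqxx. Qed.

Lemma all_sc X (u : X -> 'I_n * T) i xs :
  all (fun x => (u x).1 == i) xs -> same_copy (map u xs).
Proof.
case: xs => //= x0 xs /andP[/eqP h0 H]; rewrite all_map; apply: sub_all H => y /=.
by rewrite h0.
Qed.

Definition inK (j : nat) (X : finstr Ln) :=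
  exists e, is_embedding (frel X) J e /\ forall x, (e x).1 < j.

Definition X1 (X : finstr Ln) (eX : fcar X -> 'I_n * T) (j : nat) : finstr Ln :=
  @FinStr Ln ({x : fcar X | (eX x).1 < j})
    (fun s xs => J s (map (eX \o val) xs)).
Definition X2 (X : finstr Ln) (eX : fcar X -> 'I_n * T) (j : nat) : finstr L :=
  @FinStr L ({x : fcar X | ~~ ((eX x).1 < j)})
    (fun s xs => I s (map (snd \o eX \o val) xs)).

Definition hG (C1 C2 : finType) (e1 : C1 -> 'I_n * T) (e2 : C2 -> T) (jj : 'I_n)
  (z : C1 + C2) : 'I_n * T :=
  match z with inl c => e1 c | inr d => (jj, e2 d) end.

Definition Glue (C1 : finstr Ln) (C2 : finstr L) (e1 : fcar C1 -> 'I_n * T)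
  (e2 : fcar C2 -> T) (jj : 'I_n) : finstr Ln :=
  @FinStr Ln ((fcar C1 + fcar C2)%type)
    (fun s xs => J s (map (hG e1 e2 jj) xs)).

Lemma X1_emb X (eX : fcar X -> 'I_n * T) j : injective eX -> is_embedding (frel (@X1 X eX j)) J (eX \o val).
Proof. by move=> ie; split=> //; apply: inj_comp => //; exact: val_inj. Qed.


Lemma X2_emb X (eX : fcar X -> 'I_n * T) (jj : 'I_n) : injective eX -> (forall x, (eX x).1 < jj.+1) ->
  is_embedding (frel (@X2 X eX jj)) I (snd \o eX \o val).
Proof.
move=> ie hx; split=> //.
have f1 : forall z, ~~ ((eX z).1 < jj) -> (eX z).1 = jj.
  move=> z hz; apply: val_inj; apply/eqP; rewrite eqn_leq -ltnS hx /=.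
  rewrite leqNgt; exact: hz.
move=> [x hx1] [y hy1] /= e; apply: val_inj => /=; apply: ie.
move: e; rewrite /comp /= => e.
apply: injective_projections; last exact: e.
by rewrite (f1 x hx1) (f1 y hy1).
Qed.

Lemma Glue_emb C1 C2 (e1 : fcar C1 -> 'I_n * T) (e2 : fcar C2 -> T) (jj : 'I_n) :
  injective e1 -> injective e2 -> (forall c, (e1 c).1 < jj) ->
  is_embedding (frel (@Glue C1 C2 e1 e2 jj)) J (hG e1 e2 jj).
Proof.
move=> i1 i2 h; split=> //.
case=> [c|d] [c'|d'] /= e.
- by rewrite (i1 _ _ e).
- by have := h c; rewrite e /= ltnn.
- by have := h c'; rewrite -e /= ltnn.
- by case: e => /i2 ->.
Qed.

Definition U (A B : finType) (S1 : {set A}) (S2 : {set B}) : {set (A + B)%type} :=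
  inl @: S1 :|: inr @: S2.

Lemma L1 (X : finstr Ln) (eX : fcar X -> 'I_n * T) (jj : 'I_n)
  (C1 : finstr Ln) (C2 : finstr L) (e1 : fcar C1 -> 'I_n * T) (e2 : fcar C2 -> T)
  (f1 : fcar (X1 eX jj) -> fcar C1) (f2 : fcar (X2 eX jj) -> fcar C2) :
  is_embedding (frel X) J eX -> (forall x, (eX x).1 < jj.+1) ->
  is_embedding (frel C1) J e1 -> (forall c, (e1 c).1 < jj) ->
  is_embedding (frel C2) I e2 ->
  is_embedding (frel (X1 eX jj)) (frel C1) f1 ->
  is_embedding (frel (X2 eX jj)) (frel C2) f2 ->
  exists f, is_embedding (frel X) (frel (Glue e1 e2 jj)) f /\
    f @: setT = U (f1 @: setT) (f2 @: setT).
Proof.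
move=> hX px h1 p1 h2 hf1 hf2.
have [i1 E1] := (emb_char f1 (X1_emb jj hX.1) h1).1 hf1.
have [i2 E2] := (emb_char f2 (X2_emb hX.1 px) h2).1 hf2.
pose P1 := fun x => (eX x).1 < jj.
have fj : forall x, ~~ P1 x -> (eX x).1 = jj.
  move=> z hz; apply: val_inj; apply/eqP; rewrite eqn_leq -ltnS px /=.
  rewrite leqNgt; exact: hz.
have Hex : forall x, exists r, (forall h : P1 x, r = inl (f1 (exist P1 x h))) /\
   (forall h : ~~ P1 x, r = inr (f2 (exist (fun x => ~~ P1 x) x h))).
  move=> x; case/orP: (orbN (P1 x)) => hx.
    exists (inl (f1 (exist P1 x hx))); split=> h; last by case/negP: h.
    by rewrite (bool_irrelevance h hx).
  exists (inr (f2 (exist (fun x => ~~ P1 x) x hx))); split=> h; first by case/negP: hx.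
  by rewrite (bool_irrelevance h hx).
pose f x := proj1_sig (constructive_indefinite_description _ (Hex x)).
have Hf x : (forall h : P1 x, f x = inl (f1 (exist P1 x h))) /\
   (forall h : ~~ P1 x, f x = inr (f2 (exist (fun x => ~~ P1 x) x h))).
  exact: (proj2_sig (constructive_indefinite_description _ (Hex x))).
have f_l : forall y : fcar (X1 eX jj), f (val y) = inl (f1 y).
  by case=> x h; exact: (Hf x).1.
have f_r : forall y : fcar (X2 eX jj), f (val y) = inr (f2 y).
  by case=> x h; exact: (Hf x).2.
exists f; split; last first.
  apply/setP => z; apply/imsetP/setUP => [[x _ ->]|[]/imsetP[c /imsetP[y _ ->] ->]].
  - case/orP: (orbN (P1 x)) => hx.
      by left; rewrite ((Hf x).1 hx); apply: imset_f; apply: imset_f.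
    by right; rewrite ((Hf x).2 hx); apply: imset_f; apply: imset_f.
  - by exists (val y) => //; rewrite f_l.
  - by exists (val y) => //; rewrite f_r.
apply/(emb_char f hX (Glue_emb h1.1 h2.1 p1)); split.
  move=> x x'.
  case/orP: (orbN (P1 x)) => hx; case/orP: (orbN (P1 x')) => hx';
    rewrite ?((Hf x).1 hx) ?((Hf x).2 hx) ?((Hf x').1 hx') ?((Hf x').2 hx') //.
    by case=> /i1 /(congr1 val).
  by case=> /i2 /(congr1 val).
apply: pw_ind.
  move=> x; case/orP: (orbN (P1 x)) => hx.
    rewrite /= ((Hf x).1 hx) /=; exact: (ind_fst E1 (exist P1 x hx)).
  by rewrite /= ((Hf x).2 hx) /= fj.
move=> s [|x0 xs] Hs sc; first by [].
have /allP Hall := sc_all sc.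
case/orP: (orbN (P1 x0)) => h0.
  have : all P1 (x0 :: xs).
    by apply/allP => x hx; rewrite /P1 (eqP (Hall x hx)).
  case/lift_seq => ys Eys; rewrite -Eys.
  have eA : map (snd \o eX) (map val ys) = map (snd \o (eX \o val)) ys by rewrite -map_comp.
  have eB : map (snd \o (hG e1 e2 jj \o f)) (map val ys) = map (snd \o (e1 \o f1)) ys.
    by rewrite -map_comp; apply: eq_map => y /=; rewrite f_l.
  rewrite eA eB; apply: (ind_pw E1); first by rewrite -Hs -Eys size_map.
  by rewrite map_comp Eys.
have : all (fun x => ~~ P1 x) (x0 :: xs).
  by apply/allP => x hx; rewrite /P1 (eqP (Hall x hx)).
case/lift_seq => ys Eys; rewrite -Eys.
have eA : map (snd \o eX) (map val ys) = map (snd \o eX \o val) ys by rewrite -map_comp.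
have eB : map (snd \o (hG e1 e2 jj \o f)) (map val ys) = map (e2 \o f2) ys.
  by rewrite -map_comp; apply: eq_map => y /=; rewrite f_r.
rewrite eA eB; apply: E2; by rewrite -Hs -Eys size_map.
Qed.

Lemma L2 (X : finstr Ln) (eX : fcar X -> 'I_n * T) (jj : 'I_n)
  (C1 : finstr Ln) (C2 : finstr L) (e1 : fcar C1 -> 'I_n * T) (e2 : fcar C2 -> T)
  (f : fcar X -> fcar (Glue e1 e2 jj)) :
  is_embedding (frel X) J eX -> (forall x, (eX x).1 < jj.+1) ->
  is_embedding (frel C1) J e1 -> (forall c, (e1 c).1 < jj) ->
  is_embedding (frel C2) I e2 ->
  is_embedding (frel X) (frel (Glue e1 e2 jj)) f ->
  exists f1 f2, is_embedding (frel (X1 eX jj)) (frel C1) f1 /\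
    is_embedding (frel (X2 eX jj)) (frel C2) f2 /\
    f @: setT = U (f1 @: setT) (f2 @: setT).
Proof.
move=> hX px h1 p1 h2 hf.
have [fi E] := (emb_char f hX (Glue_emb h1.1 h2.1 p1)).1 hf.
have Ef := ind_fst E.
pose P1 := fun x => (eX x).1 < jj.
have fj : forall x, ~~ P1 x -> (eX x).1 = jj.
  move=> z hz; apply: val_inj; apply/eqP; rewrite eqn_leq -ltnS px /=.
  rewrite leqNgt; exact: hz.
have ex1 : forall y : fcar (X1 eX jj), exists c, f (val y) = inl c.
  case=> x hx /=; case E': (f x) => [c|d]; first by exists c.
  have := Ef x; rewrite /= E' /= => e.
  by move: hx; rewrite e ltnn.
have ex2 : forall y : fcar (X2 eX jj), exists d, f (val y) = inr d.
  case=> x hx /=; case E': (f x) => [c|d]; last by exists d.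
  have := Ef x; rewrite /= E' => e; have := p1 c; rewrite -e => hc.
  by case/negP: hx.
pose f1 y := proj1_sig (constructive_indefinite_description _ (ex1 y)).
have f1E y : f (val y) = inl (f1 y).
  exact: (proj2_sig (constructive_indefinite_description _ (ex1 y))).
pose f2 y := proj1_sig (constructive_indefinite_description _ (ex2 y)).
have f2E y : f (val y) = inr (f2 y).
  exact: (proj2_sig (constructive_indefinite_description _ (ex2 y))).
exists f1, f2; split; [|split].
- apply/(emb_char f1 (X1_emb jj hX.1) h1); split.
    by move=> y y' e; apply: val_inj; apply: fi; rewrite !f1E e.
  apply: pw_ind.
    by move=> y /=; rewrite (Ef (val y)) /= f1E.
  move=> s ys Hs sc.
  have e3 : map (snd \o (hG e1 e2 jj \o f)) (map val ys) = map (snd \o (e1 \o f1)) ys.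
    by rewrite -map_comp; apply: eq_map => y /=; rewrite f1E.
  have e4 : map (snd \o eX) (map val ys) = map (snd \o (eX \o val)) ys by rewrite -map_comp.
  rewrite -e3 -e4; apply: (ind_pw E); first by rewrite size_map.
  by rewrite -map_comp.
- apply/(emb_char f2 (X2_emb hX.1 px) h2); split.
    by move=> y y' e; apply: val_inj; apply: fi; rewrite !f2E e.
  move=> s ys Hs.
  have e3 : map (snd \o (hG e1 e2 jj \o f)) (map val ys) = map (e2 \o f2) ys.
    by rewrite -map_comp; apply: eq_map => y /=; rewrite f2E.
  have e4 : map (snd \o eX) (map val ys) = map (snd \o eX \o val) ys by rewrite -map_comp.
  rewrite -e3 -e4; apply: (ind_pw E); first by rewrite size_map.
  apply: (@all_sc _ _ jj); rewrite all_map; apply/allP => y _ /=.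
  by rewrite fj //; case: y.
apply/setP => z; apply/imsetP/setUP => [[x _ ->]|[]/imsetP[c /imsetP[y _ ->] ->]].
- case/orP: (orbN (P1 x)) => hx.
    by left; rewrite -[x]/(val (exist P1 x hx)) f1E; apply: imset_f; apply: imset_f.
  by right; rewrite -[x]/(val (exist (fun x => ~~ P1 x) x hx)) f2E; apply: imset_f; apply: imset_f.
- by exists (val y) => //; rewrite f1E.
- by exists (val y) => //; rewrite f2E.
Qed.

Lemma U_inj (A B : finType) (S1 S1' : {set A}) (S2 S2' : {set B}) :
  U S1 S2 \subset U S1' S2' -> S1 \subset S1' /\ S2 \subset S2'.
Proof.
move/subsetP=> H; split; apply/subsetP => x hx.
  have /H : inl x \in U S1 S2 by rewrite /U inE imset_f.
  by rewrite /U inE => /orP[/imsetP[y hy [->]] | /imsetP[y _]].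
have /H : inr x \in U S1 S2 by rewrite /U inE orbC imset_f.
by rewrite /U inE => /orP[/imsetP[y _] | /imsetP[y hy [->]]].
Qed.

Lemma step (jj : 'I_n) : ramsey (age I) -> ramsey (inK jj) -> ramsey (inK jj.+1).
Proof.
move=> RI RK k k0 A B [eA [hA pA]] [eB [hB pB]].
have [C2 [[e2 h2] HC2]] := RI k k0 (X2 eA jj) (X2 eB jj)
  (ex_intro _ _ (X2_emb hA.1 pA)) (ex_intro _ _ (X2_emb hB.1 pB)).
have N0 : 0 < #|{ffun {set fcar C2} -> 'I_k}|.
  by apply/card_gt0P; exists [ffun=> Ordinal k0].
have inA1 : inK jj (X1 eA jj).
  by exists (eA \o val); split; [exact: X1_emb hA.1 | case].
have inB1 : inK jj (X1 eB jj).
  by exists (eB \o val); split; [exact: X1_emb hB.1 | case].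
have [C1 [[e1 [h1 p1]] HC1]] := RK _ N0 _ _ inA1 inB1.
exists (Glue e1 e2 jj); split.
  exists (hG e1 e2 jj); split; first exact: Glue_emb h1.1 h2.1 p1.
  by case=> [c|d] /=; [exact: ltnW (p1 c) | exact: ltnSn].
move=> c.
pose g S1 : {ffun {set fcar C2} -> 'I_k} := [ffun S2 => c (U S1 S2)].
have [S1' [cB1 H1]] := HC1 (fun S1 => enum_rank (g S1)).
have [f1 [hf1 ES1]] := cB1.
have cpB : forall S2' : {set fcar C2}, copy (X2 eB jj) S2' ->
    @copy _ (Glue e1 e2 jj) B (U S1' S2').
  move=> S2' [f2 [hf2 ->]]; rewrite ES1.
  have [f [hf E]] := L1 hB pB h1 p1 h2 hf1 hf2.
  by exists f.
case: (classic (exists S0 : {set fcar C1}, S0 \subset S1' /\ copy (X1 eA jj) S0)) => [[S0 [sS0 cS0]] | Hno].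
  have [S2' [cB2 H2]] := HC2 (fun S2 => c (U S0 S2)).
  exists (U S1' S2'); split; first exact: cpB.
  have key : forall Sa : {set fcar (Glue e1 e2 jj)}, Sa \subset U S1' S2' -> copy A Sa ->
      exists Sa1 Sa2, [/\ Sa = U Sa1 Sa2, Sa1 \subset S1', Sa2 \subset S2',
        copy (X1 eA jj) Sa1 & copy (X2 eA jj) Sa2].
    move=> Sa sa [fa [hfa Esa]].
    have [fa1 [fa2 [ha1 [ha2 Ea]]]] := L2 hA pA h1 p1 h2 hfa.
    exists (fa1 @: setT), (fa2 @: setT); rewrite Esa Ea in sa *.
    have [sa1 sa2] := U_inj sa.
    by split => //; [exists fa1 | exists fa2].
  have red : forall (Sa1 : {set fcar C1}) (Sa2 : {set fcar C2}), Sa1 \subset S1' -> copy (X1 eA jj) Sa1 ->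
      c (U Sa1 Sa2) = c (U S0 Sa2).
    move=> Sa1 Sa2 s1 cp1.
    have e := enum_rank_inj (H1 _ _ s1 sS0 cp1 cS0).
    by have := congr1 (fun h : {ffun {set fcar C2} -> 'I_k} => h Sa2) e; rewrite /= !ffunE.
  move=> Sa Sb sa sb ca cb.
  have [Sa1 [Sa2 [-> sa1 sa2 ca1 ca2]]] := key Sa sa ca.
  have [Sb1 [Sb2 [-> sb1 sb2 cb1 cb2]]] := key Sb sb cb.
  rewrite (red _ _ sa1 ca1) (red _ _ sb1 cb1).
  exact: (H2 _ _ sa2 sb2 ca2 cb2).
have [S2' [cB2 H2]] := HC2 (fun _ => Ordinal k0).
exists (U S1' S2'); split; first exact: cpB.
move=> Sa Sb sa sb [fa [hfa Ea']].
exfalso; apply: Hno.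
have [fa1 [fa2 [ha1 [ha2 Ea]]]] := L2 hA pA h1 p1 h2 hfa.
rewrite Ea' Ea in sa; have [sa1 _] := U_inj sa.
by exists (fa1 @: setT); split => //; exists fa1.
Qed.

Lemma base : ramsey (inK 0).
Proof.
move=> k k0 A B _ [eB [hB pB]].
exists B; split; first by exists eB.
move=> c; exists setT; split.
  exists id; split; last by rewrite imset_id.
  by split=> [x y //|s xs _]; rewrite map_id.
move=> S1 S2 _ _ _ _; congr c; apply/setP => x.
by have := pB x.
Qed.

Lemma upto j : j <= n -> ramsey (age I) -> ramsey (inK j).
Proof.
move=> hj RI; elim: j hj => [_|j IH hj]; first exact: base.
exact: (@step (Ordinal hj) RI (IH (ltnW hj))).
Qed.

Lemma final : ramsey (age I) -> ramsey (age J).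
Proof.
move=> RI k k0 A B [eA hA] [eB hB].
have [C [[e [h _]] arr]] := upto (leqnn n) RI k0
  (ex_intro _ eA (conj hA (fun x => ltn_ord _)))
  (ex_intro _ eB (conj hB (fun x => ltn_ord _))).
by exists C; split => //; exists e.
Qed.
End Main.

Theorem theorem6p1 (L : lang) (E lt : sym L) (T : Type) (I : interp L T) (n : nat) :
  E <> lt -> ar E = 2 -> ar lt = 2 ->
  countable T ->
  tournament (binrel I E) ->
  homogeneous (binrel I E) ->
  strict_linear_order (binrel I lt) ->
  ramsey (age I) ->
  0 < n ->
  ramsey (age (In_interp lt n I)).
Proof.
move=> _ _ Hlt _ _ _ _ RI _.
exact: (final Hlt RI).
Qed.
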